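(* Let $\theta$ be an ordered partial action of an inverse semigroupoid $\mathcal{S}$ on a partially ordered set $X$, and let $(\eta,E,i)$ be the ordered globalization given by the globalization construction with the induced order on $E$. Then for every ordered global action $\zeta=(\{F_s\},\{\zeta_s\})$ of $\mathcal{S}$ on a poset $F$ and every ordered $\mathcal{S}$-equivariant map $j:X\to F$, there exists a unique ordered $\mathcal{S}$-equivariant map $k:E\to F$ with $k\circ i=j$; it is given by $k([s,x])=\zeta_s(j(x))$.
   Context: Inverse semigroupoid: arrows $\mathcal{S}$, objects $\mathcal{S}^{(0)}$, maps $d,c$, associative multiplication on $\mathcal{S}^{(2)}=\{(s,t):d(s)=c(t)\}$ with $d(st)=d(t)$, $c(st)=c(s)$, and unique $s^*$ with $ss^*s=s$, $s^*ss^*=s^*$; $E(\mathcal{S})$ = idempotents; natural partial order $s\leqslant t$ (for parallel $s,t$) iff $s=te$ for an idempotent $e$ with $(t,e)\in\mathcal{S}^{(2)}$. A partial action of $\mathcal{S}$ on a set $X$ is a pair $(\{X_s\},\{\theta_s\})$ of subsets $X_s\subseteq X$ and maps $\theta_s:X_{s^*}\to X_s$ such that: each $\theta_s$ is a bijection with $\theta_s^{-1}=\theta_{s^*}$ and $X=\bigcup_s X_s$; $\theta_s\circ\theta_t\subseteq\theta_{st}$ as partial maps for $(s,t)\in\mathcal{S}^{(2)}$; $X_s\subseteq X_t$ whenever $s\leqslant t$. It is global if $\theta_s\circ\theta_t=\theta_{st}$ for all $(s,t)\in\mathcal{S}^{(2)}$. When $X$ is a poset, it is an ordered partial action if each $X_s$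 is an order ideal of $X$ and each $\theta_s$ is an order isomorphism. A map $\varphi:X\to Y$ between sets with partial actions $\theta^X,\theta^Y$ is $\mathcal{S}$-equivariant if $\varphi(X_s)\subseteq Y_s$ and $\varphi(\theta^X_s(x))=\theta^Y_s(\varphi(x))$ for $x\in X_{s^*}$; it is ordered $\mathcal{S}$-equivariant if moreover order preserving. Globalization construction: let $D=\{(s,x)\in\mathcal{S}\times X: x\in X_{s^*s}\}$. Define $(s,x)\sim(t,y)$ on $D$ iff either (R1) $(t^*,s)\in\mathcal{S}^{(2)}$, $x\in X_{s^*t}$ and $\theta_{t^*s}(x)=y$; or (R2) $s,t\in E(\mathcal{S})$ and $x=y$. Let $\approx$ be the equivalence relation on $D$ generated by $\sim$, $E=D/{\approx}$, and $[s,x]$ the class of $(s,x)$. For $s\in\mathcal{S}$ put $D_s=\{(p,x)\in D:(s^*,p)\in\mathcal{S}^{(2)},\ x\in X_{p^*ss^*p}\}$, $E_s=\{[p,x]:(p,x)\in D_s\}$, and $\eta_s:E_{s^*}\to E_s$, $\eta_s([p,x])=[sp,x]$ for $(p,x)\in D_{s^*}$. Define $i:X\to E$ by $i(x)=[e,x]$ for any $e\in E(\mathcal{S})$ with $x\in X_e$. The order on $E$: $[s,x]\leqslant[t,y]$ iff there exist $(r,y')\in D$ and $x'\in X$ with $(r,y')\approx(t,y)$, $x'\leqslant y'$, $(r,x')\approx(s,x)$; with it $\eta$ is an ordered global action. *)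

(* Defs.v *)
From Stdlib Require Import Relations ClassicalEpsilon.

Set Implicit Arguments.

(* Inverse semigroupoids.  The multiplication is a total function on   *)
(* arrows, but all axioms only constrain it on composable pairs        *)
(* (s,t) with d(s) = c(t); its values elsewhere are irrelevant.        *)
Record InvSemigroupoid := {
  arr : Type;
  obj : Type;
  dm : arr -> obj;
  cd : arr -> obj;
  mul : arr -> arr -> arr;
  star : arr -> arr;
  dm_mul : forall s t, dm s = cd t -> dm (mul s t) = dm t;
  cd_mul : forall s t, dm s = cd t -> cd (mul s t) = cd s;
  mul_assoc : forall s t u, dm s = cd t -> dm t = cd u ->
      mul (mul s t) u = mul s (mul t u);
  star_dm : forall s, dm s = cd (star s);
  star_cd : forall s, dm (star s) = cd s;
  star_l : forall s, mul (mul s (star s)) s = s;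
  star_r : forall s, mul (mul (star s) s) (star s) = star s;
  star_uniq : forall s t, dm s = cd t -> dm t = cd s ->
      mul (mul s t) s = s -> mul (mul t s) t = t -> t = star s
}.

Arguments dm {_} _.
Arguments cd {_} _.
Arguments mul {_} _ _.
Arguments star {_} _.

Definition idempotent (S : InvSemigroupoid) (e : arr S) : Prop :=
  dm e = cd e /\ mul e e = e.

Definition nat_le (S : InvSemigroupoid) (s t : arr S) : Prop :=
  dm s = dm t /\ cd s = cd t /\
  exists e, idempotent S e /\ dm t = cd e /\ s = mul t e.

(* Partial actions: domains Xs s = X_s and maps th s = theta_s, the    *)
(* latter total functions that only matter on X_{s*}.                  *)
Definition partial_action {S : InvSemigroupoid} {X : Type}
    (Xs : arr S -> X -> Prop) (th : arr S -> X -> X) : Prop :=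
  (forall s x, Xs (star s) x -> Xs s (th s x) /\ th (star s) (th s x) = x) /\
  (forall s y, Xs s y -> Xs (star s) (th (star s) y) /\ th s (th (star s) y) = y) /\
  (forall x, exists s, Xs s x) /\
  (forall s t, dm s = cd t -> forall x, Xs (star t) x -> Xs (star s) (th t x) ->
      Xs (star (mul s t)) x /\ th (mul s t) x = th s (th t x)) /\
  (forall s t, nat_le S s t -> forall x, Xs s x -> Xs t x).

Definition global_action {S : InvSemigroupoid} {X : Type}
    (Xs : arr S -> X -> Prop) (th : arr S -> X -> X) : Prop :=
  partial_action Xs th /\
  (forall s t, dm s = cd t -> forall x,
      (Xs (star (mul s t)) x <-> (Xs (star t) x /\ Xs (star s) (th t x))) /\
      (Xs (star (mul s t)) x -> th (mul s t) x = th s (th t x))).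

Definition is_poset {X : Type} (le : X -> X -> Prop) : Prop :=
  (forall x, le x x) /\
  (forall x y, le x y -> le y x -> x = y) /\
  (forall x y z, le x y -> le y z -> le x z).

Definition order_ideal {X : Type} (le : X -> X -> Prop) (A : X -> Prop) : Prop :=
  forall x y, le x y -> A y -> A x.

Definition ordered_partial_action {S : InvSemigroupoid} {X : Type}
    (le : X -> X -> Prop) (Xs : arr S -> X -> Prop) (th : arr S -> X -> X) : Prop :=
  partial_action Xs th /\
  (forall s, order_ideal le (Xs s)) /\
  (forall s x y, Xs (star s) x -> Xs (star s) y -> (le x y <-> le (th s x) (th s y))).

Definition ordered_global_action {S : InvSemigroupoid} {X : Type}
    (le : X -> X -> Prop) (Xs : arr S -> X -> Prop) (th : arr S -> X -> X) : Prop :=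
  ordered_partial_action le Xs th /\ global_action Xs th.

Definition equivariant {S : InvSemigroupoid} {X Y : Type}
    (Xs : arr S -> X -> Prop) (th : arr S -> X -> X)
    (Ys : arr S -> Y -> Prop) (ze : arr S -> Y -> Y) (phi : X -> Y) : Prop :=
  (forall s x, Xs s x -> Ys s (phi x)) /\
  (forall s x, Xs (star s) x -> phi (th s x) = ze s (phi x)).

Definition ordered_equivariant {S : InvSemigroupoid} {X Y : Type}
    (leX : X -> X -> Prop) (Xs : arr S -> X -> Prop) (th : arr S -> X -> X)
    (leY : Y -> Y -> Prop) (Ys : arr S -> Y -> Prop) (ze : arr S -> Y -> Y)
    (phi : X -> Y) : Prop :=
  equivariant Xs th Ys ze phi /\ (forall x y, leX x y -> leY (phi x) (phi y)).

Section Glob.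
Context {S : InvSemigroupoid} {X : Type}
          (Xs : arr S -> X -> Prop) (th : arr S -> X -> X).

Definition Dg (a : arr S * X) : Prop :=
  let (s, x) := a in Xs (mul (star s) s) x.

Definition simg (a b : arr S * X) : Prop :=
  let (s, x) := a in let (t, y) := b in
  (dm (star t) = cd s /\ Xs (mul (star s) t) x /\ th (mul (star t) s) x = y) \/
  (idempotent S s /\ idempotent S t /\ x = y).

Definition simD (a b : arr S * X) : Prop := Dg a /\ Dg b /\ simg a b.

Definition approx (a b : arr S * X) : Prop :=
  Dg a /\ Dg b /\ clos_refl_sym_trans _ simD a b.

(* E = D / approx, realised as the type of equivalence classes *)
Definition Eg : Type := { P : arr S * X -> Prop | exists a, Dg a /\ P = approx a }.

Definition cls (a : arr S * X) (H : Dg a) : Eg :=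
  exist _ (approx a) (ex_intro _ a (conj H eq_refl)).

Definition Dsg (s : arr S) (a : arr S * X) : Prop :=
  let (p, x) := a in
  Dg a /\ dm (star s) = cd p /\ Xs (mul (mul (mul (star p) s) (star s)) p) x.

Definition Esg (s : arr S) (e : Eg) : Prop :=
  exists p x, proj1_sig e (p, x) /\ Dsg s (p, x).

(* eta_s([p,x]) = [sp,x] for (p,x) in D_{s*} (value outside E_{s*} irrelevant) *)
Definition etag (s : arr S) (e : Eg) : Eg :=
  epsilon (inhabits e) (fun e' => exists p x,
     Dsg (star s) (p, x) /\ proj1_sig e (p, x) /\ proj1_sig e' (mul s p, x)).

Definition leEg (le : X -> X -> Prop) (e1 e2 : Eg) : Prop :=
  exists r y' x', proj1_sig e2 (r, y') /\ le x' y' /\ proj1_sig e1 (r, x').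

Lemma star_star_g (s : arr S) : star (star s) = s.
Proof.
  symmetry. apply star_uniq.
  - apply star_cd.
  - apply star_dm.
  - apply star_r.
  - apply star_l.
Qed.

Lemma i_exists (H : partial_action Xs th) (x : X) :
  exists e : arr S, idempotent S e /\ Xs e x /\ Dg (e, x).
Proof.
  destruct H as [Hb [_ [Hcov [Hc _]]]].
  destruct (Hcov x) as [s Hs].
  set (e := mul s (star s)).
  assert (Hdc : dm s = cd (star s)) by apply star_dm.
  assert (Hde : dm e = cd e).
  { unfold e. rewrite dm_mul by exact Hdc. rewrite cd_mul by exact Hdc.
    apply star_cd. }
  assert (Hee : mul e e = e).
  { unfold e. rewrite <- mul_assoc.
    - rewrite star_l. reflexivity.
    - rewrite dm_mul by exact Hdc. apply star_cd.
    - exact Hdc. }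
  assert (Hse : star e = e).
  { symmetry. apply star_uniq; try assumption; try (symmetry; assumption);
    rewrite Hee; exact Hee. }
  assert (HXe : Xs e x).
  { rewrite <- Hse. unfold e.
    apply (Hc s (star s) Hdc x).
    - rewrite star_star_g. exact Hs.
    - destruct (Hb (star s) x) as [H1 _].
      + rewrite star_star_g. exact Hs.
      + exact H1. }
  exists e. split; [split; assumption|]. split; [exact HXe|].
  simpl. rewrite Hse, Hee. exact HXe.
Qed.

Definition ig (H : partial_action Xs th) (x : X) : Eg :=
  let w := constructive_indefinite_description _ (i_exists H x) in
  @cls (proj1_sig w, x) (proj2 (proj2 (proj2_sig w))).

End Glob.

Arguments Esg {S X} Xs th s e.
Arguments etag {S X} Xs th s e.
Arguments leEg {S X} Xs th le e1 e2.
Arguments ig {S X} Xs th H x.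
Arguments cls {S X} Xs th a H.
Arguments Dsg {S X} Xs s a.

(* Main.v *)
Require Import Defs.
From Stdlib Require Import Relations ClassicalEpsilon FunctionalExtensionality PropExtensionality ProofIrrelevance.

Section Alg.
Variable S : InvSemigroupoid.
Implicit Types s t u e f g w : arr S.

Lemma dm_star s : dm (star s) = cd s. Proof. apply star_cd. Qed.
Lemma cd_star s : cd (star s) = dm s. Proof. symmetry; apply star_dm. Qed.

Ltac dcs := rewrite ?dm_star, ?cd_star in *; repeat (progress (rewrite ?dm_star, ?cd_star, ?star_star_g;
   try (rewrite dm_mul by dcs); try (rewrite cd_mul by dcs))); congruence.

Ltac ra := repeat (rewrite mul_assoc by dcs).
Ltac ra_in H := repeat (rewrite mul_assoc in H by dcs).
Ltac tailH H w H' := pose proof (f_equal (fun z => mul z w) H) as H'; simpl in H'; ra_in H'.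

Lemma sl s : mul s (mul (star s) s) = s.
Proof. rewrite <- mul_assoc by dcs. apply star_l. Qed.
Lemma sr s : mul (star s) (mul s (star s)) = star s.
Proof. rewrite <- mul_assoc by dcs. apply star_r. Qed.

Lemma idem_star e : idempotent S e -> star e = e.
Proof. intros [H1 H2]. symmetry. apply star_uniq; auto; rewrite !H2; auto. Qed.

Lemma idem_tail e w : idempotent S e -> dm e = cd w -> mul e (mul e w) = mul e w.
Proof. intros [H1 H2] H. rewrite <- mul_assoc by congruence. now rewrite H2. Qed.

Lemma ef_idem e f : idempotent S e -> idempotent S f -> dm e = cd f ->
  idempotent S (mul e f).
Proof.
  intros He Hf Hef. pose proof He as [He1 He2]. pose proof Hf as [Hf1 Hf2].
  assert (Hugu : mul (mul e f) (mul (star (mul e f)) (mul e f)) = mul e f) by apply sl.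
  assert (Hgug : mul (star (mul e f)) (mul (mul e f) (star (mul e f))) = star (mul e f)) by apply sr.
  assert (Hg1 : dm (star (mul e f)) = cd e) by dcs.
  assert (Hg2 : cd (star (mul e f)) = dm f) by dcs.
  remember (star (mul e f)) as g eqn:Hg.
  ra_in Hugu. ra_in Hgug.
  assert (Hfge : mul f (mul g e) = g).
  { rewrite Hg at 2. apply star_uniq.
    - dcs.
    - dcs.
    - ra. rewrite (idem_tail f) by (auto; dcs).
      rewrite (idem_tail e) by (auto; dcs). exact Hugu.
    - ra. rewrite (idem_tail e) by (auto; dcs).
      rewrite (idem_tail f) by (auto; dcs). 
      pose proof (f_equal (fun z => mul z e) Hgug) as H'; simpl in H'; ra_in H'.
      rewrite H'. reflexivity. }
  assert (Hgg : mul g g = g).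
  { transitivity (mul (mul f (mul g e)) (mul f (mul g e))). { now rewrite Hfge. }
    ra. tailH Hgug e H'. rewrite H'. exact Hfge. }
  assert (Hgi : idempotent S g) by (split; [dcs| exact Hgg]).
  assert (Hu : mul e f = g).
  { rewrite <- (star_star_g (mul e f)). rewrite <- Hg. apply idem_star; auto. }
  rewrite Hu. exact Hgi.
Qed.

Lemma idem_comm e f : idempotent S e -> idempotent S f -> dm e = cd f ->
  mul e f = mul f e.
Proof.
  intros He Hf Hef. pose proof He as [He1 He2]. pose proof Hf as [Hf1 Hf2].
  pose proof (ef_idem _ _ He Hf Hef) as Hu.
  assert (Hfe : dm f = cd e) by congruence.
  pose proof (ef_idem _ _ Hf He Hfe) as Hv.
  rewrite <- (idem_star _ Hu). symmetry. apply star_uniq.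
  - dcs.
  - dcs.
  - ra. rewrite (idem_tail f) by (auto; dcs). rewrite (idem_tail e) by (auto; dcs).
    destruct Hu as [_ Hu2]. ra_in Hu2. exact Hu2.
  - ra. rewrite (idem_tail e) by (auto; dcs). rewrite (idem_tail f) by (auto; dcs).
    destruct Hv as [_ Hv2]. ra_in Hv2. exact Hv2.
Qed.


Lemma slt s w : dm s = cd w -> mul s (mul (star s) (mul s w)) = mul s w.
Proof. intros. tailH (sl s) w H'. exact H'. Qed.
Lemma srt s w : cd s = cd w -> mul (star s) (mul s (mul (star s) w)) = mul (star s) w.
Proof. intros. tailH (sr s) w H'. exact H'. Qed.

Lemma idem_ls s : idempotent S (mul (star s) s).
Proof. split. dcs. ra. now rewrite srt by dcs. Qed.
Lemma idem_rs s : idempotent S (mul s (star s)).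
Proof. split. dcs. ra. now rewrite slt by dcs. Qed.

Lemma comm_t e f w : idempotent S e -> idempotent S f -> dm e = cd f -> dm f = cd w ->
  mul e (mul f w) = mul f (mul e w).
Proof.
  intros He Hf H1 H2. pose proof He as [He1 _]. pose proof Hf as [Hf1 _].
  rewrite <- !mul_assoc by congruence. now rewrite (idem_comm _ _ He Hf H1).
Qed.

Lemma star_mul s t : dm s = cd t -> star (mul s t) = mul (star t) (star s).
Proof.
  intros H. symmetry. apply star_uniq.
  - dcs.
  - dcs.
  - ra. pose proof (comm_t (mul t (star t)) (mul (star s) s) t (idem_rs t) (idem_ls s) ltac:(dcs) ltac:(dcs)) as Hc.
    ra_in Hc. rewrite Hc. rewrite slt by dcs. rewrite sl. reflexivity.
  - ra. pose proof (comm_t (mul (star s) s) (mul t (star t)) (star s) (idem_ls s) (idem_rs t) ltac:(dcs) ltac:(dcs)) as Hc.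
    ra_in Hc. rewrite Hc. rewrite srt by dcs. rewrite sr. reflexivity.
Qed.

Lemma comm_e_rs e c w : idempotent S e -> dm e = cd c -> cd c = cd w ->
  mul e (mul c (mul (star c) w)) = mul c (mul (star c) (mul e w)).
Proof.
  intros He H1 H2. pose proof He as [He1 _].
  pose proof (comm_t e (mul c (star c)) w He (idem_rs c) ltac:(dcs) ltac:(dcs)) as Hc.
  ra_in Hc. exact Hc.
Qed.

Lemma comm_rs_rs b c w : cd b = cd c -> cd c = cd w ->
  mul b (mul (star b) (mul c (mul (star c) w))) = mul c (mul (star c) (mul b (mul (star b) w))).
Proof.
  intros H1 H2.
  pose proof (comm_e_rs (mul b (star b)) c w (idem_rs b) ltac:(dcs) ltac:(dcs)) as Hc.
  ra_in Hc. exact Hc.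
Qed.

Lemma idem_conj e c : idempotent S e -> dm e = cd c ->
  idempotent S (mul (star c) (mul e c)).
Proof.
  intros He H. pose proof He as [He1 He2]. split. dcs.
  ra. rewrite comm_e_rs by (auto; dcs). rewrite idem_tail by (auto; dcs). rewrite srt by dcs. reflexivity.
Qed.

Lemma idem_sq e : idempotent S e -> mul e e = e.
Proof. intros [_ H]; exact H. Qed.

End Alg.

Ltac dcs := rewrite ?dm_star, ?cd_star in *; repeat (progress (rewrite ?dm_star, ?cd_star, ?star_star_g;
   try (rewrite dm_mul by dcs); try (rewrite cd_mul by dcs))); congruence.
Ltac ra := repeat (rewrite mul_assoc by dcs).
Ltac ra_in H := repeat (rewrite mul_assoc in H by dcs).
Ltac tailH H w H' := pose proof (f_equal (fun z => mul z w) H) as H'; simpl in H'; ra_in H'.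


Section PA.
Variable S : InvSemigroupoid.
Variable X : Type.
Variable Xs : arr S -> X -> Prop.
Variable th : arr S -> X -> X.
Hypothesis Hp : partial_action Xs th.

Lemma pa_b1 s x : Xs (star s) x -> Xs s (th s x) /\ th (star s) (th s x) = x.
Proof. apply Hp. Qed.
Lemma pa_b2 s y : Xs s y -> Xs (star s) (th (star s) y) /\ th s (th (star s) y) = y.
Proof. apply Hp. Qed.
Lemma pa_comp s t x : dm s = cd t -> Xs (star t) x -> Xs (star s) (th t x) ->
      Xs (star (mul s t)) x /\ th (mul s t) x = th s (th t x).
Proof. intros; apply Hp; auto. Qed.
Lemma pa_mono s t x : nat_le S s t -> Xs s x -> Xs t x.
Proof. intros; eapply Hp; eauto. Qed.

Lemma pa_id e x : idempotent S e -> Xs e x -> th e x = x.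
Proof.
  intros He Hx. pose proof (idem_star _ _ He) as Hse.
  assert (Hx' : Xs (star e) x) by now rewrite Hse.
  destruct (pa_b1 e x Hx') as [H1 H2].
  assert (H1' : Xs (star e) (th e x)) by now rewrite Hse.
  destruct (pa_comp e e x (proj1 He) Hx' H1') as [_ H3].
  rewrite (idem_sq _ _ He) in H3.
  destruct (pa_b1 e _ H1') as [_ H4].
  rewrite <- H3 in H4. rewrite H2 in H4. symmetry; exact H4.
Qed.

Lemma pa_dom_ss s x : Xs (star s) x -> Xs (mul (star s) s) x.
Proof.
  intros Hx. destruct (pa_b1 s x Hx) as [H1 _].
  assert (H1' : Xs (star (star s)) (th s x)) by now rewrite star_star_g.
  destruct (pa_comp (star s) s x ltac:(dcs) Hx H1') as [H _].
  rewrite star_mul, star_star_g in H by dcs. exact H.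
Qed.

Lemma pa_dom_rs u x : Xs u x -> Xs (mul u (star u)) x.
Proof.
  intros Hx. pose proof (pa_dom_ss (star u) x) as H. rewrite !star_star_g in H. auto.
Qed.

Lemma pa_idr t e x : idempotent S e -> dm t = cd e -> Xs e x -> Xs (star t) x ->
  Xs (star (mul t e)) x /\ th (mul t e) x = th t x.
Proof.
  intros He Ht Hx Hx'. pose proof (idem_star _ _ He) as Hse.
  rewrite <- (pa_id e x He Hx) at 3.
  apply pa_comp; auto. now rewrite Hse. now rewrite (pa_id e x He Hx).
Qed.

Definition R1 s x t y := dm (star t) = cd s /\ Xs (mul (star s) t) x /\ th (mul (star t) s) x = y.
Definition C2 s x t y := Xs (star s) x /\ Xs (star t) y /\ th s x = th t y.
Definition Q s x t y := R1 s x t y \/ C2 s x t y.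

Lemma R1_sym s x t y : R1 s x t y -> R1 t y s x.
Proof.
  intros [H1 [H2 H3]]. 
  assert (Hx : Xs (star (mul (star t) s)) x) by (rewrite star_mul, star_star_g by dcs; auto).
  destruct (pa_b1 _ _ Hx) as [H4 H5]. subst y.
  split; [dcs|]. split; auto.
  assert (E : mul (star s) t = star (mul (star t) s)) by (rewrite star_mul, star_star_g by dcs; reflexivity).
  rewrite E; auto.
Qed.

Lemma L1 c z b y : R1 c z b y -> Xs (star b) y -> Xs (star c) z /\ th c z = th b y.
Proof.
  intros [H1 [H2 H3]] Hy.
  assert (Hz : Xs (star (mul (star b) c)) z) by (rewrite star_mul, star_star_g by dcs; auto).
  assert (Hy' : Xs (star b) (th (mul (star b) c) z)) by (rewrite H3; auto).
  destruct (pa_comp b (mul (star b) c) z ltac:(dcs) Hz Hy') as [HA HB].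
  rewrite !star_mul, star_star_g in HA by dcs. ra_in HA.
  assert (Hzc : Xs (star c) z).
  { apply (pa_mono (mul (star c) (mul b (star b)))); auto.
    split; [dcs|]. split; [dcs|]. exists (mul b (star b)).
    split; [apply idem_rs|]. split; [dcs| reflexivity]. }
  split; auto.
  pose proof (idem_conj _ (mul b (star b)) c (idem_rs _ b) ltac:(dcs)) as HE.
  assert (HzE : Xs (mul (star c) (mul (mul b (star b)) c)) z).
  { pose proof (pa_dom_rs _ _ H2) as H. rewrite star_mul, star_star_g in H by dcs.
    ra_in H. ra. exact H. }
  destruct (pa_idr c _ z HE ltac:(dcs) HzE Hzc) as [_ HC].
  rewrite <- HC, <- H3, <- HB. f_equal.
  ra. rewrite comm_rs_rs by dcs. rewrite sl. reflexivity.
Qed.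

Lemma L2 a x b y c z : R1 a x b y -> R1 b y c z -> R1 a x c z.
Proof.
  intros [H1 [H2 H3]] [H4 [H5 H6]].
  assert (Hx : Xs (star (mul (star b) a)) x) by (rewrite star_mul, star_star_g by dcs; auto).
  assert (Hy : Xs (star (mul (star c) b)) (th (mul (star b) a) x))
    by (rewrite H3, star_mul, star_star_g by dcs; auto).
  destruct (pa_comp (mul (star c) b) (mul (star b) a) x ltac:(dcs) Hx Hy) as [HA HB].
  rewrite !star_mul, !star_star_g in HA by dcs. ra_in HA.
  assert (Hxac : Xs (mul (star a) c) x).
  { apply (pa_mono (mul (star a) (mul b (mul (star b) c)))); auto.
    split; [dcs|]. split; [dcs|]. exists (mul (star c) (mul (mul b (star b)) c)).
    split; [apply idem_conj; [apply idem_rs | dcs]|]. split; [dcs|].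
    ra. rewrite comm_rs_rs by dcs. rewrite sl. reflexivity. }
  split; [dcs|]. split; auto.
  pose proof (idem_conj _ (mul b (star b)) a (idem_rs _ b) ltac:(dcs)) as HE.
  assert (HxE : Xs (mul (star a) (mul (mul b (star b)) a)) x).
  { pose proof (pa_dom_rs _ _ H2) as H. rewrite star_mul, star_star_g in H by dcs.
    ra_in H. ra. exact H. }
  assert (Hxs : Xs (star (mul (star c) a)) x) by (rewrite star_mul, star_star_g by dcs; auto).
  destruct (pa_idr (mul (star c) a) _ x HE ltac:(dcs) HxE Hxs) as [_ HC].
  rewrite <- HC, <- H6, <- H3, <- HB. f_equal.
  ra. rewrite comm_rs_rs by dcs. rewrite sl. reflexivity.
Qed.

Lemma Q_sym s x t y : Q s x t y -> Q t y s x.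
Proof.
  intros [H|[H1 [H2 H3]]]; [left; apply R1_sym; auto | right; split; auto].
Qed.

Lemma Q_trans a x b y c z : Q a x b y -> Q b y c z -> Q a x c z.
Proof.
  intros [H|[H1 [H2 H3]]] [H'|[H1' [H2' H3']]].
  - left. eapply L2; eauto.
  - right. destruct (L1 a x b y H H1'). split; auto. split; auto. congruence.
  - right. destruct (L1 c z b y (R1_sym _ _ _ _ H') H2). split; auto. split; auto. congruence.
  - right. split; auto. split; auto. congruence.
Qed.

Definition Qp (a b : arr S * X) : Prop := Q (fst a) (snd a) (fst b) (snd b).

Lemma simD_Q a b : simD Xs th a b -> Qp a b.
Proof.
  destruct a as [s x], b as [t y]. intros [Ha [Hb H]]. unfold Qp; simpl in *.
  destruct H as [H|[Hs [Ht Hxy]]]; [left; exact H|]. subst y. right.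
  pose proof (idem_star _ _ Hs) as E1. pose proof (idem_star _ _ Ht) as E2.
  rewrite E1, (idem_sq _ _ Hs) in Ha. rewrite E2, (idem_sq _ _ Ht) in Hb.
  unfold C2. rewrite E1, E2. split; auto. split; auto.
  rewrite (pa_id s x Hs Ha), (pa_id t x Ht Hb). reflexivity.
Qed.

Lemma crst_Q a b : clos_refl_sym_trans _ (simD Xs th) a b -> a = b \/ Qp a b.
Proof.
  induction 1.
  - right. apply simD_Q; auto.
  - left; auto.
  - destruct IHclos_refl_sym_trans as [->|H0]; [left; auto| right].
    destruct x, y; apply Q_sym; exact H0.
  - destruct IHclos_refl_sym_trans1 as [->|H1]; destruct IHclos_refl_sym_trans2 as [->|H2]; auto.
    right. destruct x, y, z. eapply Q_trans; eauto.
Qed.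
End PA.

Section EgL.
Variable S : InvSemigroupoid.
Variable X : Type.
Variable Xs : arr S -> X -> Prop.
Variable th : arr S -> X -> X.

Lemma approx_sym a b : approx Xs th a b -> approx Xs th b a.
Proof. intros [H1 [H2 H3]]. split; auto. split; auto. apply rst_sym; auto. Qed.
Lemma approx_trans a b c : approx Xs th a b -> approx Xs th b c -> approx Xs th a c.
Proof. intros [H1 [H2 H3]] [H4 [H5 H6]]. split; auto. split; auto. eapply rst_trans; eauto. Qed.
Lemma approx_refl a : Dg Xs a -> approx Xs th a a.
Proof. intros; split; auto. split; auto. apply rst_refl. Qed.

Lemma mem_D (e : Eg Xs th) a : proj1_sig e a -> Dg Xs a.
Proof. destruct e as [P [a0 [H0 ->]]]. simpl. intros [_ [H _]]; auto. Qed.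

Lemma mem_approx (e : Eg Xs th) a b : proj1_sig e a -> proj1_sig e b -> approx Xs th a b.
Proof.
  destruct e as [P [a0 [H0 ->]]]. simpl. intros. eapply approx_trans; [apply approx_sym|]; eauto.
Qed.

Lemma mem_close (e : Eg Xs th) a b : proj1_sig e a -> approx Xs th a b -> proj1_sig e b.
Proof.
  destruct e as [P [a0 [H0 ->]]]. simpl. intros. eapply approx_trans; eauto.
Qed.

Lemma rep_ex (e : Eg Xs th) : exists a, proj1_sig e a.
Proof. destruct e as [P [a0 [H0 ->]]]. exists a0. simpl. apply approx_refl; auto. Qed.

Lemma Eg_eq (e1 e2 : Eg Xs th) a b : proj1_sig e1 a -> proj1_sig e2 b -> approx Xs th a b -> e1 = e2.
Proof.
  intros H1 H2 H.
  assert (E : proj1_sig e1 = proj1_sig e2).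
  { apply functional_extensionality; intro c. apply propositional_extensionality. split; intro Hc.
    - eapply mem_close; [exact H2|]. eapply approx_trans; [apply approx_sym; exact H|].
      eapply mem_approx; eauto.
    - eapply mem_close; [exact H1|]. eapply approx_trans; [exact H|].
      eapply mem_approx; eauto. }
  destruct e1 as [P1 p1], e2 as [P2 p2]. simpl in E. subst P2. f_equal. apply proof_irrelevance.
Qed.

Lemma cls_mem a (H : Dg Xs a) : proj1_sig (cls Xs th a H) a.
Proof. simpl. apply approx_refl; auto. Qed.

End EgL.

Section Main.
Variable S : InvSemigroupoid.
Variable X : Type.
Variable leX : X -> X -> Prop.
Variable Xs : arr S -> X -> Prop.
Variable th : arr S -> X -> X.
Hypothesis Hth : ordered_partial_action leX Xs th.
Variable F : Type.
Variable leF : F -> F -> Prop.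
Variable Fs : arr S -> F -> Prop.
Variable ze : arr S -> F -> F.
Hypothesis Hze : ordered_global_action leF Fs ze.
Variable j : X -> F.
Hypothesis Hj : ordered_equivariant leX Xs th leF Fs ze j.

Let Hp : partial_action Xs th := proj1 Hth.
Let HpF : partial_action Fs ze := proj1 (proj1 Hze).

Lemma G_split s t z : dm s = cd t -> Fs (star (mul s t)) z ->
  Fs (star t) z /\ Fs (star s) (ze t z) /\ ze (mul s t) z = ze s (ze t z).
Proof.
  intros H Hz. pose proof (proj2 (proj2 Hze)) as HG. destruct (HG s t H z) as [[H1 _] H2].
  destruct (H1 Hz). auto.
Qed.

Lemma G_ss s z : Fs (mul (star s) s) z -> Fs (star s) z.
Proof.
  intros Hz. assert (Hz' : Fs (star (mul (star s) s)) z) by (rewrite star_mul, star_star_g by dcs; auto).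
  destruct (G_split (star s) s z ltac:(dcs) Hz'); tauto.
Qed.

Lemma j_dom s x : Xs s x -> Fs s (j x). Proof. apply Hj. Qed.
Lemma j_th s x : Xs (star s) x -> j (th s x) = ze s (j x). Proof. apply Hj. Qed.

Definition val (a : arr S * X) : F := ze (fst a) (j (snd a)).

Lemma val_Q s x t y : Dg Xs (t, y) -> Q S X Xs th s x t y -> val (s, x) = val (t, y).
Proof.
  unfold val; simpl. intros Hy [[H1 [H2 H3]]|[H1 [H2 H3]]].
  - assert (Hx : Xs (star (mul (star t) s)) x) by (rewrite star_mul, star_star_g by dcs; auto).
    assert (Ey : j y = ze (mul (star t) s) (j x)) by (rewrite <- H3; apply j_th; auto).
    assert (Hjy : Fs (star t) (j y)) by (apply G_ss; apply j_dom; exact Hy).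
    assert (Hjx : Fs (star (mul (star t) s)) (j x)) by (apply j_dom; auto).
    pose proof (proj2 (proj2 Hze)) as HG.
    destruct (HG t (mul (star t) s) ltac:(dcs) (j x)) as [[_ HJ] HC].
    rewrite <- Ey in HJ. specialize (HJ (conj Hjx Hjy)).
    pose proof HJ as HJ'. rewrite <- mul_assoc in HJ by dcs.
    destruct (G_split (mul t (star t)) s (j x) ltac:(dcs) HJ) as [_ [HA HB]].
    rewrite Ey, <- HC by auto. rewrite <- mul_assoc by dcs. rewrite HB.
    rewrite (idem_star _ _ (idem_rs _ t)) in HA.
    rewrite (pa_id _ _ _ _ HpF _ _ (idem_rs _ t) HA). reflexivity.
  - rewrite <- !j_th by auto. congruence.
Qed.

Lemma val_approx a b : approx Xs th a b -> val a = val b.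
Proof.
  intros [Ha [Hb H]]. destruct (crst_Q _ _ _ _ Hp _ _ H) as [->|HQ]; auto.
  destruct a, b. apply val_Q; auto.
Qed.

Definition k0 (e : Eg Xs th) : F :=
  val (proj1_sig (constructive_indefinite_description _ (rep_ex _ _ _ _ e))).

Lemma k0_spec e a : proj1_sig e a -> k0 e = val a.
Proof.
  intros H. unfold k0. destruct (constructive_indefinite_description _ _) as [b Hb]. simpl.
  apply val_approx. eapply mem_approx; eauto.
Qed.

Lemma Dsg_D s p x : Dsg Xs (star s) (p, x) -> Dg Xs (mul s p, x).
Proof.
  simpl. intros [_ [H1 H2]]. rewrite star_star_g in *. rewrite star_mul by dcs.
  ra_in H2. ra. exact H2.
Qed.

Lemma etag_spec s e : Esg Xs th (star s) e -> exists p x, Dsg Xs (star s) (p, x) /\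
   proj1_sig e (p, x) /\ proj1_sig (etag Xs th s e) (mul s p, x).
Proof.
  intros [p [x [He HD]]]. unfold etag. apply epsilon_spec.
  exists (cls Xs th (mul s p, x) (Dsg_D s p x HD)). exists p, x. split; auto. split; auto.
  apply cls_mem.
Qed.

Lemma k0_dom s e : Esg Xs th s e -> Fs s (k0 e).
Proof.
  intros [p [x [He [HDg [H1 H2]]]]]. rewrite (k0_spec _ _ He). unfold val; simpl.
  apply j_dom in H2. rewrite dm_star in H1.
  assert (H3 : Fs (mul (star (mul (star s) p)) (mul (star s) p)) (j x)).
  { rewrite star_mul, star_star_g by dcs. ra. ra_in H2. exact H2. }
  apply G_ss in H3. destruct (G_split (star s) p (j x) ltac:(dcs) H3) as [_ [H4 _]].
  rewrite star_star_g in H4. exact H4.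
Qed.

Lemma k0_th s e : Esg Xs th (star s) e -> k0 (etag Xs th s e) = ze s (k0 e).
Proof.
  intros HE. destruct (etag_spec s e HE) as [p [x [HD [He He']]]].
  rewrite (k0_spec _ _ He), (k0_spec _ _ He'). unfold val; simpl.
  pose proof (Dsg_D s p x HD) as HD'. simpl in HD'. apply j_dom in HD'. apply G_ss in HD'.
  destruct HD as [_ [H1 _]]. rewrite star_star_g in H1.
  destruct (G_split s p (j x) ltac:(dcs) HD') as [_ [_ H]]. exact H.
Qed.

Lemma k0_mono e1 e2 : leEg Xs th leX e1 e2 -> leF (k0 e1) (k0 e2).
Proof.
  intros [r [y' [x' [H2 [Hle H1]]]]]. rewrite (k0_spec _ _ H1), (k0_spec _ _ H2). unfold val; simpl.
  pose proof (mem_D _ _ _ _ _ _ H1) as D1. pose proof (mem_D _ _ _ _ _ _ H2) as D2.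
  simpl in D1, D2. apply j_dom, G_ss in D1. apply j_dom, G_ss in D2.
  apply (proj2 (proj2 (proj1 Hze)) r (j x') (j y') D1 D2). apply (proj2 Hj). exact Hle.
Qed.

Lemma ig_mem x : exists e0, idempotent S e0 /\ Dg Xs (e0, x) /\ proj1_sig (ig Xs th Hp x) (e0, x).
Proof.
  unfold ig. destruct (constructive_indefinite_description _ _) as [e0 [Hi [Hx HD]]].
  exists e0. split; auto. split; auto. apply cls_mem.
Qed.

Lemma k0_ig x : k0 (ig Xs th Hp x) = j x.
Proof.
  destruct (ig_mem x) as [e0 [Hi [HD Hm]]]. rewrite (k0_spec _ _ Hm). unfold val; simpl.
  simpl in HD. rewrite (idem_star _ _ Hi), (idem_sq _ _ Hi) in HD.
  apply (pa_id _ _ _ _ HpF _ _ Hi). apply j_dom; auto.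
Qed.

Lemma uniq_k (k : Eg Xs th -> F) :
  ordered_equivariant (leEg Xs th leX) (Esg Xs th) (etag Xs th) leF Fs ze k ->
  (forall x, k (ig Xs th Hp x) = j x) ->
  forall (s : arr S) (x : X) (e : Eg Xs th), proj1_sig e (s, x) -> k e = ze s (j x).
Proof.
  intros Hk Hi s x e He.
  pose proof (mem_D _ _ _ _ _ _ He) as HDs. simpl in HDs.
  destruct (ig_mem x) as [e0 [He0 [HD0 Hm0]]].
  assert (HDss : Dg Xs (mul (star s) s, x)).
  { simpl. rewrite (idem_star _ _ (idem_ls _ s)), (idem_sq _ _ (idem_ls _ s)). exact HDs. }
  assert (Hss : proj1_sig (ig Xs th Hp x) (mul (star s) s, x)).
  { eapply mem_close; [exact Hm0|]. split; auto. split; auto. apply rst_step.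
    split; auto. split; auto. right. split; auto. split; auto. apply idem_ls. }
  assert (HE : Esg Xs th (star s) (ig Xs th Hp x)).
  { exists (mul (star s) s), x. split; auto. split; auto. split; [dcs|].
    rewrite (idem_star _ _ (idem_ls _ s)), star_star_g. ra. rewrite !srt by dcs. exact HDs. }
  destruct (etag_spec s _ HE) as [p [x' [HD [Hw He']]]].
  pose proof (proj2 (proj1 Hk) s _ HE) as Hkt. rewrite Hi in Hkt.
  rewrite <- Hkt. symmetry.
  pose proof (Dsg_D s p x' HD) as HDsp.
  destruct HD as [HDp [Hsp Hxp]]. rewrite star_star_g in Hsp.
  apply (f_equal k). eapply Eg_eq; [exact He'| exact He|].
  pose proof (mem_approx _ _ _ _ _ _ _ Hw Hss) as Hap.
  destruct Hap as [_ [_ Hap]].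
  destruct (crst_Q _ _ _ _ Hp _ _ Hap) as [Eq|HQ].
  - inversion Eq; subst. rewrite sl. apply approx_refl. exact HDs.
  - split; auto. split; [simpl; auto|]. apply rst_step. split; auto. split; [simpl; auto|].
    left. unfold Qp in HQ; simpl in HQ.
    destruct HQ as [[H1 [H2 H3]]|[H1 [H2 H3]]].
    + rewrite (idem_star _ _ (idem_ls _ s)) in H3. split; [dcs|].
      rewrite star_mul by dcs. ra. ra_in H2. ra_in H3. split; auto.
    + rewrite (pa_id _ _ _ _ Hp _ _ (idem_ls _ s) HDs) in H3.
      assert (H4 : Xs (star (mul (star s) s)) (th p x')) by (rewrite H3; auto).
      destruct (pa_comp _ _ _ _ Hp (mul (star s) s) p x' ltac:(dcs) H1 H4) as [HA HB].
      rewrite H3, (pa_id _ _ _ _ Hp _ _ (idem_ls _ s) HDs) in HB.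
      rewrite star_mul, (idem_star _ _ (idem_ls _ s)) in HA by dcs.
      split; [dcs|]. rewrite star_mul by dcs. ra. ra_in HA. ra_in HB. split; auto.
Qed.
End Main.

Theorem mainTheorem7
  (S : InvSemigroupoid) (X : Type) (leX : X -> X -> Prop)
  (Xs : arr S -> X -> Prop) (th : arr S -> X -> X)
  (HX : is_poset leX) (Hth : ordered_partial_action leX Xs th)
  (F : Type) (leF : F -> F -> Prop)
  (Fs : arr S -> F -> Prop) (ze : arr S -> F -> F)
  (HF : is_poset leF) (Hze : ordered_global_action leF Fs ze)
  (j : X -> F) (Hj : ordered_equivariant leX Xs th leF Fs ze j) :
  (exists! k : Eg Xs th -> F,
      ordered_equivariant (leEg Xs th leX) (Esg Xs th) (etag Xs th) leF Fs ze k /\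
      (forall x, k (ig Xs th (proj1 Hth) x) = j x)) /\
  (forall k : Eg Xs th -> F,
      ordered_equivariant (leEg Xs th leX) (Esg Xs th) (etag Xs th) leF Fs ze k ->
      (forall x, k (ig Xs th (proj1 Hth) x) = j x) ->
      forall (s : arr S) (x : X) (e : Eg Xs th),
        proj1_sig e (s, x) -> k e = ze s (j x)).
Proof.
  split.
  - exists (k0 S X Xs th F ze j). split.
    + split.
      * split; [split|].
        -- intros s e H. exact (k0_dom S X leX Xs th Hth F leF Fs ze Hze j Hj s e H).
        -- intros s e H. exact (k0_th S X leX Xs th Hth F leF Fs ze Hze j Hj s e H).
        -- intros e1 e2 H. exact (k0_mono S X leX Xs th Hth F leF Fs ze Hze j Hj e1 e2 H).
      * intros x. exact (k0_ig S X leX Xs th Hth F leF Fs ze Hze j Hj x).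
    + intros k [Hk Hi]. apply functional_extensionality. intros e.
      destruct (rep_ex S X Xs th e) as [[s x] Ha].
      rewrite (k0_spec S X leX Xs th Hth F leF Fs ze Hze j Hj e _ Ha).
      rewrite (uniq_k S X leX Xs th Hth F leF Fs ze j k Hk Hi s x e Ha). reflexivity.
  - intros k Hk Hi. exact (uniq_k S X leX Xs th Hth F leF Fs ze j k Hk Hi).
Qed.
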